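(* Fix integers $1\le L\le D\le K$. The capacity of the JPLT-II problem (single-server private linear transformation with joint privacy under Model II) with $K$ messages, demand support size $D$ and demand dimension $L$ equals $\dfrac{L}{K-D+L}$. That is, every JPLT-II protocol, over any field $\mathbb{F}_q$ and any message length $N$, has rate at most $L/(K-D+L)$, and for every prime power $q\ge K$ there is a JPLT-II protocol achieving rate exactly $L/(K-D+L)$.
   Context: Setup. Let $q$ be a prime power, $N\ge 1$ an integer, $B=N\log_2 q$, and $1\le L\le D\le K$ integers. Let $\mathbb{W}$ be the set of all $D$-element subsets of $[K]=\{1,\dots,K\}$. Let $\mathbb{V}_I$ be the set of $L\times D$ matrices over $\mathbb{F}_q$ that are MDS (every $L\times L$ submatrix is invertible), and $\mathbb{V}_{II}$ the set of $L\times D$ matrices over $\mathbb{F}_q$ of rank $L$. A server stores messages $X_1,\dots,X_K\in\mathbb{F}_q^N$ (row vectors), which are independent and uniformly distributed; $X$ denotes the $K\times N$ matrix with rows $X_1,\dots,X_K$, and for $S\subseteq[K]$, $X_S$ is the submatrix of rows indexed by $S$ (in increasing order). For $W\in\mathbb{W}$ and an $L\times D$ matrix $V$, the demand is $Z^{[W,V]}=VX_W=UX$, where the global coefficient matrix $U$ is the $L\times K$ matrix whose columns indexed by $W$ (in increasing order) are the columns of $V$ and whose other columns are zero. The demand support $W$ is uniform on $\mathbb{W}$; the coefficient matrix $V$ is uniform on $\mathbb{V}_I$ (Model I) or on $\mathbb{V}_{II}$ (Model II); $W,V,X$ are mutually independent. The server knows $K,D,L$ and these distributions but not the realizations of $W,V$.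 Protocol. The user draws private randomness $R$ independent of $(W,V,X)$ and sends a query $Q=Q^{[W,V]}$ that is a function of $(W,V,R)$; the server returns an answer $A=A^{[W,V]}$ that is a deterministic function of $(Q,X)$. Recoverability: $H(Z^{[W,V]}\mid A,Q,W,V)=0$. Joint privacy: for every realization $\mathrm{Q}$ of the query with positive probability and every $\tilde W\in\mathbb{W}$, $\Pr(W=\tilde W\mid Q=\mathrm{Q})=1/\binom{K}{D}$. A JPLT-I (resp. JPLT-II) protocol is a protocol satisfying recoverability and joint privacy under Model I (resp. Model II). The rate of a protocol is $H(Z^{[W,V]})/H(A)=LB/H(A)$. The capacity is the supremum of rates over all such protocols and all field sizes $q$ (for fixed $K,D,L$). *)

(* Defs.v *)
From HB Require Import structures.
From mathcomp Require Import all_boot all_order all_algebra.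
From mathcomp Require Import reals exp.
Set Implicit Arguments. Unset Strict Implicit. Unset Printing Implicit Defensive.
Import Order.TTheory GRing.Theory Num.Theory.
Local Open Scope ring_scope.

Definition prob (R : realType) (Om : finType) (P : {ffun Om -> R})
  (E : pred Om) : R := \sum_(o : Om | E o) P o.

Definition log2 (R : realType) (x : R) : R := ln x / ln 2.

Definition entropy (R : realType) (Om T : finType) (P : {ffun Om -> R})
  (X : Om -> T) : R :=
  \sum_(t : T) (let p := prob P (fun o => X o == t) in
                if p == 0 then 0 else - (p * log2 p)).

Definition cond_entropy (R : realType) (Om T S : finType) (P : {ffun Om -> R})
  (X : Om -> T) (Y : Om -> S) : R :=
  entropy P (fun o => (X o, Y o)) - entropy P Y.

Definition Wset (K D : nat) : {set {set 'I_K}} := [set w : {set 'I_K} | #|w| == D].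

Definition VsetII (F : finFieldType) (L D : nat) : {set 'M[F]_(L, D)} :=
  [set v : 'M[F]_(L, D) | \rank v == L].

(* global coefficient matrix U: the columns of U indexed by w (in increasing
   order) are the columns of v; the other columns are zero.  The column j \in w
   is the k-th element of w where k = #{l in w | l < j}. *)
Definition globalU (F : finFieldType) (K D L : nat) (w : {set 'I_K})
  (v : 'M[F]_(L, D)) : 'M[F]_(L, K) :=
  \matrix_(i < L, j < K)
     \sum_(k < D | (j \in w) && (#|[set l in w | (l < j)%N]| == k)) v i k.

(* sample space: (W, V, R, X) *)
Definition Omega (F : finFieldType) (K D L N : nat) (Rt : finType) : finType :=
  ({set 'I_K} * 'M[F]_(L, D) * Rt * 'M[F]_(K, N))%type.

Definition jointII (R : realType) (F : finFieldType) (K D L N : nat)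
  (Rt : finType) (PR : {ffun Rt -> R}) : {ffun Omega F K D L N Rt -> R} :=
  [ffun o : Omega F K D L N Rt =>
     (if o.1.1.1 \in Wset K D then (#|Wset K D|%:R)^-1 else 0)
   * (if o.1.1.2 \in VsetII F L D then (#|VsetII F L D|%:R)^-1 else 0)
   * PR o.1.2
   * (#|{: 'M[F]_(K, N)}|%:R)^-1].

Definition rvW (F : finFieldType) (K D L N : nat) (Rt : finType) (o : Omega F K D L N Rt) : {set 'I_K} := o.1.1.1.
Definition rvV (F : finFieldType) (K D L N : nat) (Rt : finType) (o : Omega F K D L N Rt) : 'M[F]_(L, D) := o.1.1.2.
Definition rvX (F : finFieldType) (K D L N : nat) (Rt : finType) (o : Omega F K D L N Rt) : 'M[F]_(K, N) := o.2.
Definition rvQ (F : finFieldType) (K D L N : nat) (Rt : finType) (Qt : finType)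
  (qf : {set 'I_K} -> 'M[F]_(L, D) -> Rt -> Qt) (o : Omega F K D L N Rt) : Qt :=
  qf o.1.1.1 o.1.1.2 o.1.2.
Definition rvA (F : finFieldType) (K D L N : nat) (Rt : finType) (Qt At : finType)
  (qf : {set 'I_K} -> 'M[F]_(L, D) -> Rt -> Qt) (af : Qt -> 'M[F]_(K, N) -> At)
  (o : Omega F K D L N Rt) : At :=
  af (rvQ qf o) o.2.
(* demand Z = V X_W = U X *)
Definition rvZ (F : finFieldType) (K D L N : nat) (Rt : finType) (o : Omega F K D L N Rt) : 'M[F]_(L, N) :=
  globalU o.1.1.1 o.1.1.2 *m o.2.

(* A JPLT-II protocol: private randomness R with distribution PR on a finite
   type Rt, query Q = qf(W,V,R), answer A = af(Q,X). *)
Definition is_JPLT_II (R : realType) (F : finFieldType) (K D L N : nat)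
  (Rt Qt At : finType) (PR : {ffun Rt -> R})
  (qf : {set 'I_K} -> 'M[F]_(L, D) -> Rt -> Qt)
  (af : Qt -> 'M[F]_(K, N) -> At) : Prop :=
  let P := @jointII R F K D L N Rt PR in
  [/\ (forall r, 0 <= PR r), \sum_(r : Rt) PR r = 1,
      cond_entropy P (@rvZ F K D L N Rt)
        (fun o => (rvA qf af o, rvQ qf o, rvW o, rvV o)) = 0 &
      forall (Q0 : Qt), 0 < prob P (fun o => rvQ qf o == Q0) ->
      forall (w0 : {set 'I_K}), w0 \in Wset K D ->
        prob P (fun o => (rvW o == w0) && (rvQ qf o == Q0))
          / prob P (fun o => rvQ qf o == Q0) = ('C(K, D)%:R)^-1 ].

(* rate = L B / H(A), with B = N log2 q *)
Definition rateII (R : realType) (F : finFieldType) (K D L N : nat)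
  (Rt Qt At : finType) (PR : {ffun Rt -> R})
  (qf : {set 'I_K} -> 'M[F]_(L, D) -> Rt -> Qt)
  (af : Qt -> 'M[F]_(K, N) -> At) : R :=
  (L * N)%:R * log2 (#|F|%:R : R) / entropy (@jointII R F K D L N Rt PR) (rvA qf af).

(* Main.v *)
Require Import Defs.
From HB Require Import structures.
From mathcomp Require Import all_boot all_order all_algebra.
From mathcomp Require Import reals exp.
From mathcomp Require Import zify ring lra.
Set Implicit Arguments. Unset Strict Implicit. Unset Printing Implicit Defensive.
Import Order.TTheory GRing.Theory Num.Theory.
Local Open Scope ring_scope.

Section LA.
Variable F : fieldType.

Definition Eset (K : nat) (w : {set 'I_K}) : 'M[F]_K :=
  (\sum_(j in w) <<delta_mx 0 j : 'rV[F]_K>>)%MS.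

Lemma rank_Eset K (w : {set 'I_K}) : (\rank (Eset w) <= #|w|)%N.
Proof.
rewrite /Eset -sum1_card.
apply: (big_ind2 (fun (x : 'M[F]_K) (n : nat) => (\rank x <= n)%N)).
- by rewrite mxrank0.
- move=> x1 n1 x2 n2 h1 h2.
  apply: leq_trans (mxrank_adds_leqif x1 x2) _.
  exact: leq_add.
- by move=> j _; rewrite mxrank_gen mxrank_delta.
Qed.

Lemma delta_Eset K (w : {set 'I_K}) j : j \in w -> ((delta_mx 0 j : 'rV[F]_K) <= Eset w)%MS.
Proof.
move=> jw; apply: (@sumsmx_sup _ _ j) => //.
by rewrite genmxE.
Qed.

Lemma Eset_sub K (w w' : {set 'I_K}) : w \subset w' -> (Eset w <= Eset w')%MS.
Proof.
move=> sww'; apply/sumsmx_subP => j jw.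
rewrite genmxE; apply: delta_Eset; exact: (subsetP sww').
Qed.

Lemma supp_Eset m K (w : {set 'I_K}) (U : 'M[F]_(m, K)) :
  (forall i j, j \notin w -> U i j = 0) -> (U <= Eset w)%MS.
Proof.
move=> hU; apply/row_subP => i.
rewrite (row_sum_delta (row i U)).
apply: summx_sub => j _.
case: (boolP (j \in w)) => jw.
  by apply: scalemx_sub; apply: delta_Eset.
by rewrite mxE hU // scale0r sub0mx.
Qed.

Lemma greedy K (S : 'M[F]_K) m : (m <= K)%N ->
  exists w : {set 'I_K}, #|w| = m /\ (minn K (\rank S + m) <= \rank (S + Eset w))%N.
Proof.
elim: m => [|m IH] hm.
  exists set0; split; first by rewrite cards0.
  rewrite addn0; apply: leq_trans (geq_minr _ _) _.
  by apply: mxrankS; apply: addsmxSl.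
have [w [cw hw]] := IH (ltnW hm).
case: (pickP (fun j => (j \notin w) && ~~ ((delta_mx 0 j : 'rV[F]_K) <= S + Eset w)%MS)) => [j /andP [jw nj]|none].
  exists (j |: w); split; first by rewrite cardsU1 jw cw.
  have sub1 : (S + Eset w <= S + Eset (j |: w))%MS.
    by apply: addsmxS => //; apply: Eset_sub; apply: subsetUr.
  have lt1 : (S + Eset w < S + Eset (j |: w))%MS.
    rewrite ltmxE sub1 /=; apply/negP => h; move/negP: nj; apply.
    apply: submx_trans h; apply: submx_trans (addsmxSr _ _).
    by apply: delta_Eset; rewrite setU11.
  move: lt1; rewrite ltmxErank => /andP [_ lt1].
  apply: leq_trans lt1.
  move: hw; rewrite /minn; case: ifP; case: ifP => //; lia.
have full : (1%:M <= S + Eset w)%MS.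
  apply/row_subP => j; rewrite row1.
  case: (boolP (j \in w)) => jw.
    apply: submx_trans (addsmxSr _ _); exact: delta_Eset.
  by move: (none j); rewrite jw /= => /negbFE.
have rk : \rank (S + Eset w) = K.
  by apply/eqP; move: full; rewrite sub1mx.
case: (pickP (fun j => j \notin w)) => [j jw|allin].
  exists (j |: w); split; first by rewrite cardsU1 jw cw.
  have : (\rank (S + Eset w) <= \rank (S + Eset (j |: w)))%N.
    by apply: mxrankS; apply: addsmxS => //; apply: Eset_sub; apply: subsetUr.
  by rewrite rk; apply: leq_trans; apply: geq_minl.
have : (#|[set: 'I_K]| <= #|w|)%N.
  apply: subset_leq_card; apply/subsetP => j _; by move: (allin j) => /negbFE.
by rewrite cardsT card_ord cw; lia.
Qed.

Lemma dimbound K D L (S : 'M[F]_K) (Uf : {set 'I_K} -> 'M[F]_(L, K)) :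
  (1 <= L)%N -> (L <= D)%N -> (D <= K)%N ->
  (forall w : {set 'I_K}, #|w| = D ->
     (L <= \rank (Uf w))%N /\ (Uf w <= S)%MS /\ (Uf w <= Eset w)%MS) ->
  (K - D + L <= \rank S)%N.
Proof.
move=> hL hLD hDK hU; rewrite leqNgt; apply/negP => lt.
have [w [cw hw]] := greedy S hDK.
have [h1 [h2 h3]] := hU w cw.
have h4 : (Uf w <= S :&: Eset w)%MS by rewrite sub_capmx h2 h3.
have h5 := mxrankS h4.
have h6 := mxrank_sum_cap S (Eset w).
have h7 := rank_Eset w. rewrite cw in h7.
move: hw; rewrite /minn; case: ifP => _ hw; lia.
Qed.

Definition posw K (w : {set 'I_K}) (j : 'I_K) : nat := #|[set l in w | (l < j)%N]|.

Lemma posw_lt K (w : {set 'I_K}) j : j \in w -> (posw w j < #|w|)%N.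
Proof.
move=> jw; apply: proper_card; apply/properP; split.
  by apply/subsetP => l; rewrite inE => /andP [].
by exists j => //; rewrite inE ltnn andbF.
Qed.

Lemma posw_mono K (w : {set 'I_K}) j j' : j \in w -> j' \in w -> (j < j')%N ->
  (posw w j < posw w j')%N.
Proof.
move=> jw j'w ljj; apply: proper_card; apply/properP; split.
  apply/subsetP => l; rewrite !inE => /andP [-> /= h]; exact: ltn_trans h ljj.
by exists j; rewrite !inE ?jw ?ljj // ltnn andbF.
Qed.

Lemma posw_inj K (w : {set 'I_K}) j j' : j \in w -> j' \in w ->
  posw w j = posw w j' -> j = j'.
Proof.
move=> jw j'w e; apply: val_inj => /=.
case: (ltngtP j j') => // h.
  by have := posw_mono jw j'w h; rewrite e ltnn.
by have := posw_mono j'w jw h; rewrite e ltnn.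
Qed.

Lemma posw_surj K D (w : {set 'I_K}) k : #|w| = D -> (k < D)%N ->
  exists2 j, j \in w & posw w j = k.
Proof.
move=> cw kD.
set s1 := map (posw w) (enum w).
have u1 : uniq s1.
  rewrite map_inj_in_uniq ?enum_uniq // => j j'; rewrite !mem_enum; exact: posw_inj.
have sub1 : {subset s1 <= iota 0 D}.
  move=> x /mapP [j]; rewrite mem_enum => jw ->.
  by rewrite mem_iota add0n -cw posw_lt.
have sz : (size (iota 0 D) <= size s1)%N by rewrite size_iota size_map -cardE cw.
have [_ eq1] := uniq_min_size u1 sub1 sz.
have : k \in s1 by rewrite eq1 mem_iota add0n kD.
by case/mapP => j; rewrite mem_enum => jw ->; exists j.
Qed.

Lemma card_posw K D (w : {set 'I_K}) (k : nat) : #|w| = D -> (k < D)%N ->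
  #|[set j in w | posw w j == k]| = 1%N.
Proof.
move=> cw kD; have [j0 j0w e0] := posw_surj cw kD.
apply/eqP/cards1P; exists j0; apply/setP => j; rewrite !inE.
apply/andP/eqP => [[jw /eqP e]|->]; last by rewrite j0w e0.
by apply: posw_inj jw j0w _; rewrite e e0.
Qed.

Definition Emb K D (w : {set 'I_K}) : 'M[F]_(D, K) :=
  \matrix_(k < D, j < K) (((j \in w) && (posw w j == k))%:R).

Definition globalU' (K D L : nat) (w : {set 'I_K})
  (v : 'M[F]_(L, D)) : 'M[F]_(L, K) :=
  \matrix_(i < L, j < K)
     \sum_(k < D | (j \in w) && (#|[set l in w | (l < j)%N]| == k)) v i k.

Lemma globalU_Emb K D L (w : {set 'I_K}) (v : 'M[F]_(L, D)) :
  globalU' w v = v *m Emb D w.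
Proof.
apply/matrixP => i j; rewrite !mxE big_mkcond /=; apply: eq_bigr => k _.
rewrite mxE /posw; case: ifP => _; [by rewrite mulr1 | by rewrite mulr0].
Qed.

Lemma sum_bool_card (T : finType) (b : pred T) :
  \sum_(j : T) ((b j)%:R : F) = (#|[set j | b j]|)%:R.
Proof.
rewrite -sum1_card natr_sum [RHS]big_mkcond /=; apply: eq_bigr => j _.
by rewrite inE; case: (b j).
Qed.

Lemma Emb_tr K D (w : {set 'I_K}) : #|w| = D -> Emb D w *m (Emb D w)^T = 1%:M.
Proof.
move=> cw; apply/matrixP => k k'; rewrite !mxE.
under eq_bigr => j _ do rewrite !mxE -natrM mulnb.
case: (eqVneq k k') => [<-|ne].
  under eq_bigr => j _ do rewrite andbb.
  by rewrite sum_bool_card (card_posw cw (ltn_ord k)).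
rewrite big1 // => j _.
case: (j \in w) => //=; case: (eqVneq (posw w j) k) => //= e.
case: (eqVneq (posw w j) k') => //= e'.
by move/eqP: ne; case; apply: val_inj; rewrite /= -e e'.
Qed.

Lemma Emb_free K D (w : {set 'I_K}) : #|w| = D -> row_free (Emb D w).
Proof. by move=> cw; apply/row_freeP; exists (Emb D w)^T; apply: Emb_tr. Qed.

Lemma globalU_supp K D L (w : {set 'I_K}) (v : 'M[F]_(L, D)) i j :
  j \notin w -> globalU' w v i j = 0.
Proof. by move=> jw; rewrite mxE big_pred0 // => k; rewrite (negbTE jw). Qed.


Section Ghat.
Variables (K D : nat) (w : {set 'I_K}).
Hypothesis cw : #|w| = D.
Local Notation E := (Emb D w).

Definition ghat (g : 'M[F]_D) : 'M[F]_K := E^T *m g *m E + (1%:M - E^T *m E).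

Lemma EE : E *m E^T = 1%:M. Proof. exact: Emb_tr. Qed.

Lemma Emb_ghat g : E *m ghat g = g *m E.
Proof.
rewrite /ghat mulmxDr mulmxBr mulmx1 !mulmxA EE mul1mx. by rewrite mul1mx subrr addr0.

Qed.

Lemma XEP m (X : 'M[F]_(m, D)) : X *m E *m (1%:M - E^T *m E) = 0.
Proof. by rewrite mulmxBr mulmx1 !mulmxA -(mulmxA X E E^T) EE mulmx1 subrr. Qed.

Lemma PEY n (Y : 'M[F]_(D, n)) : (1%:M - E^T *m E) *m (E^T *m Y) = 0.
Proof. by rewrite mulmxBl mul1mx !mulmxA -(mulmxA E^T E E^T) EE mulmx1 subrr. Qed.

Lemma PP : (1%:M - E^T *m E) *m (1%:M - E^T *m E) = 1%:M - E^T *m E.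
Proof.
rewrite {1}mulmxBl mul1mx -(mulmxA E^T E) mulmxBr mulmx1 !mulmxA EE mul1mx.
by rewrite subrr mulmx0 subr0.
Qed.

Lemma ghat_mul g h : ghat g *m ghat h = ghat (g *m h).
Proof.
rewrite /ghat mulmxDl (mulmxDr (E^T *m g *m E)) (mulmxDr (1%:M - E^T *m E)) PP XEP addr0.
rewrite (mulmxA (1%:M - E^T *m E) (E^T *m h) E) PEY mul0mx add0r.
rewrite !mulmxA -(mulmxA (E^T *m g) E E^T) EE mulmx1.
by [].
Qed.

Lemma ghat1 : ghat 1%:M = 1%:M.
Proof. by rewrite /ghat mulmx1 addrC subrK. Qed.

Lemma ghat_unit g : g \in unitmx -> ghat g *m ghat (invmx g) = 1%:M.
Proof. by move=> gu; rewrite ghat_mul mulmxV // ghat1. Qed.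

Lemma ghat_unit' g : g \in unitmx -> ghat (invmx g) *m ghat g = 1%:M.
Proof. by move=> gu; rewrite ghat_mul mulVmx // ghat1. Qed.

Lemma exists_V L r (G : 'M[F]_(r, K)) : (D <= K)%N -> (L <= D)%N ->
  (K - D + L <= \rank G)%N ->
  exists V : 'M[F]_(L, D), \rank V = L /\ (globalU' w V <= G)%MS.
Proof.
move=> hDK hLD hG.
have rE : \rank E = D by have := Emb_free cw; rewrite /row_free => /eqP.
have hsc := mxrank_sum_cap G E.
have hK := rank_leq_col (G + E)%MS.
have hL : (L <= \rank (G :&: E))%N by lia.
set B := row_base (G :&: E)%MS.
pose Y : 'M[F]_(L, K) := pid_mx L *m B.
have rY : \rank Y = L.
  by rewrite /Y mxrankMfree ?row_base_free // rank_pid_mx.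
have sY : (Y <= G :&: E)%MS.
  by apply: submx_trans (submxMl _ _) _; rewrite /B eq_row_base.
have sYE : (Y <= E)%MS by apply: submx_trans sY (capmxSr _ _).
have sYG : (Y <= G)%MS by apply: submx_trans sY (capmxSl _ _).
have eY : Y *m E^T *m E = Y.
  by case/submxP: sYE => M ->; rewrite -!mulmxA (mulmxA E) EE mul1mx.
exists (Y *m E^T); rewrite globalU_Emb eY; split => //.
by rewrite -(mxrankMfree _ (Emb_free cw)) eY.
Qed.
End Ghat.

Lemma transit m n (V V' : 'M[F]_(m, n)) : \rank V = \rank V' ->
  exists C g, [/\ C \in unitmx, g \in unitmx & V' = C *m V *m g].
Proof.
move=> e.
have eV := mulmx_ebase V; have eV' := mulmx_ebase V'.
have hp : pid_mx (\rank V) = invmx (col_ebase V) *m V *m invmx (row_ebase V).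
  have cu := col_ebase_unit V; have ru := row_ebase_unit V.
  move: eV cu ru; set c := col_ebase V; set r := row_ebase V; set p := pid_mx _.
  move=> eV cu ru; rewrite -eV !mulmxA mulVmx // mul1mx mulmxK //.
exists (col_ebase V' *m invmx (col_ebase V)), (invmx (row_ebase V) *m row_ebase V').
split; first by rewrite unitmx_mul col_ebase_unit unitmx_inv col_ebase_unit.
  by rewrite unitmx_mul row_ebase_unit unitmx_inv row_ebase_unit.
by rewrite -{1}eV' -e hp !mulmxA.
Qed.

End LA.

Lemma inj_count (F : finFieldType) s K N (B : 'M[F]_(s, K)) (Fb : {set 'M[F]_(K, N)}) :
  row_free B ->
  (forall X X', X \in Fb -> X' \in Fb -> B *m X = B *m X') ->
  (#|Fb| * #|{: 'M[F]_(s, N)}| <= #|{: 'M[F]_(K, N)}|)%N.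
Proof.
case/row_freeP => B' hB' hF.
pose f (p : 'M[F]_(K, N) * 'M[F]_(s, N)) : 'M[F]_(K, N) := p.1 + B' *m p.2.
have inj : {in setX Fb [set: 'M[F]_(s, N)] &, injective f}.
  move=> [X Z] [X' Z']; rewrite !inE /= !andbT => hX hX' e.
  have e2 : B *m f (X, Z) = B *m f (X', Z') by rewrite e.
  rewrite /f /= !mulmxDr !mulmxA hB' !mul1mx (hF X X' hX hX') in e2.
  have eZ : Z = Z' by apply: (addrI (B *m X')).
  by move: e; rewrite /f /= eZ => /addIr ->.
rewrite -cardsT -cardsX -(card_in_imset inj); exact: max_card.
Qed.


Lemma fiber_card (F : finFieldType) s K N (G : 'M[F]_(s, K)) (a : 'M[F]_(s, N)) :
  row_free G ->
  (#|[set X : 'M[F]_(K, N) | G *m X == a]| * #|{: 'M[F]_(s, N)}| = #|{: 'M[F]_(K, N)}|)%N.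
Proof.
case/row_freeP => G' hG'.
have le (b c : 'M[F]_(s, N)) : (#|[set X : 'M[F]_(K, N) | G *m X == b]| <= #|[set X : 'M[F]_(K, N) | G *m X == c]|)%N.
  have inj : injective (fun X : 'M[F]_(K, N) => X + G' *m (c - b)) by move=> X1 X2 /addIr.
  rewrite -(card_imset _ inj); apply: subset_leq_card; apply/subsetP => Y.
  case/imsetP => X; rewrite !inE => /eqP hX ->.
  by rewrite mulmxDr mulmxA hG' mul1mx hX addrC subrK.
have eqc b : #|[set X : 'M[F]_(K, N) | G *m X == b]| = #|[set X : 'M[F]_(K, N) | G *m X == a]|.
  by apply/eqP; rewrite eqn_leq !le.
rewrite -[RHS]sum1_card (partition_big (fun X => G *m X) xpredT) //=.
transitivity (\sum_(b : 'M[F]_(s, N)) #|[set X : 'M[F]_(K, N) | G *m X == a]|).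
  by rewrite sum_nat_const mulnC.
apply: eq_bigr => b _; rewrite -(eqc b) -sum1_card.
by apply: eq_bigl => X; rewrite inE.
Qed.

Section Ent.
Variables (R : realType) (Om : finType) (P : {ffun Om -> R}).
Hypothesis P0 : forall o, 0 <= P o.

Lemma prob_ge0 (E : pred Om) : 0 <= prob P E.
Proof. by rewrite /prob; apply: sumr_ge0 => o _. Qed.

Lemma hE (p : R) : (if p == 0 then 0 else -(p * log2 p)) = -(p * log2 p).
Proof. by case: eqP => [->|//]; rewrite mul0r oppr0. Qed.

Lemma entropyE (T : finType) (X : Om -> T) :
  entropy P X = - \sum_(t : T) (prob P (fun o => X o == t) * log2 (prob P (fun o => X o == t))).
Proof. by rewrite /entropy -sumrN; apply: eq_bigr => t _ /=; rewrite hE. Qed.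

Lemma sum_prob (T : finType) (X : Om -> T) :
  \sum_(t : T) prob P (fun o => X o == t) = \sum_(o : Om) P o.
Proof. by rewrite /prob (partition_big X xpredT) //=. Qed.

Lemma ln2_gt0 : 0 < ln (2 : R).
Proof. by apply: ln_gt0; rewrite ltr1n. Qed.

Lemma log2_le (x y : R) : 0 < x -> x <= y -> log2 x <= log2 y.
Proof.
move=> x0 xy; rewrite /log2; apply: ler_wpM2r.
  by rewrite invr_ge0 ltW // ln2_gt0.
by rewrite ler_ln // ?posrE // (lt_le_trans x0 xy).
Qed.

Lemma entropy_lb (T : finType) (X : Om -> T) (c : R) :
  \sum_(o : Om) P o = 1 -> 0 < c ->
  (forall t, prob P (fun o => X o == t) <= c) -> - log2 c <= entropy P X.
Proof.
move=> s1 c0 hc; rewrite entropyE -sumrN.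
have -> : - log2 c = \sum_(t : T) (prob P (fun o => X o == t) * (- log2 c)).
  by rewrite -big_distrl /= sum_prob s1 mul1r.
apply: ler_sum => t _.
set p := prob P _.
have p0 : 0 <= p by apply: prob_ge0.
case: (eqVneq p 0) => [->|pn0]; first by rewrite !mul0r oppr0.
have pp : 0 < p by rewrite lt0r pn0 p0.
rewrite -(mulrN p (log2 p)); apply: ler_wpM2l => //; rewrite lerN2.
by apply: log2_le => //; apply: hc.
Qed.


Lemma log2_lt (x y : R) : 0 < x -> x < y -> log2 x < log2 y.
Proof.
move=> x0 xy; rewrite /log2 ltr_pM2r ?invr_gt0 ?ln2_gt0 //.
by rewrite ltr_ln // ?posrE // (lt_trans x0 xy).
Qed.

Section Pair.
Variables (T S : finType) (X : Om -> T) (Y : Om -> S).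
Let q t s := prob P (fun o => (X o, Y o) == (t, s)).
Let p s := prob P (fun o => Y o == s).

Lemma prob_pair s : p s = \sum_(t : T) q t s.
Proof.
rewrite /p /q /prob (partition_big X xpredT) //=; apply: eq_bigr => t _.
by apply: eq_bigl => o; rewrite xpair_eqE andbC.
Qed.

Lemma entropy_pair : entropy P (fun o => (X o, Y o)) =
  - \sum_(s : S) \sum_(t : T) (q t s * log2 (q t s)).
Proof.
rewrite entropyE exchange_big pair_bigA /=; congr (- _).

Qed.

Lemma entropyY : entropy P Y = - \sum_(s : S) \sum_(t : T) (q t s * log2 (p s)).
Proof.
rewrite entropyE; congr (- _); apply: eq_bigr => s _.
by rewrite -/(p s) {1}prob_pair big_distrl.
Qed.

Lemma cond0 (phi : S -> T) : (forall o, P o != 0 -> X o = phi (Y o)) ->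
  cond_entropy P X Y = 0.
Proof.
move=> hX.
have qE t s : q t s = if t == phi s then p s else 0.
  rewrite /q /p /prob; case: ifP => h.
    rewrite [LHS]big_mkcond [RHS]big_mkcond /=; apply: eq_bigr => o _.
    case: (eqVneq (P o) 0) => [->|pn]; first by case: ifP; case: ifP.
    rewrite xpair_eqE (hX o pn); case: (eqVneq (Y o) s) => [->|]; last by rewrite andbF.
    by rewrite andbT eq_sym h.
  rewrite big1 // => o /eqP [ext eys]; apply/eqP; apply: contraFT h => pn.
  by rewrite -ext (hX o pn) eys.
rewrite /cond_entropy entropy_pair entropyE; apply/eqP; rewrite subr_eq0; apply/eqP.
congr (- _); apply: eq_bigr => s _.
rewrite (bigD1 (phi s)) //= qE eqxx big1 ?addr0 // => t /negbTE tn.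
by rewrite qE tn mul0r.
Qed.

Lemma det : cond_entropy P X Y = 0 -> forall o1 o2, 0 < P o1 -> 0 < P o2 ->
  Y o1 = Y o2 -> X o1 = X o2.
Proof.
move=> h0 o1 o2 p1 p2 eY.
have q0 t s : 0 <= q t s by apply: prob_ge0.
have qle t s : q t s <= p s.
  rewrite prob_pair (bigD1 t) //= lerDl; apply: sumr_ge0 => *; apply: q0.
have term0 t s : 0 <= q t s * (log2 (p s) - log2 (q t s)).
  case: (eqVneq (q t s) 0) => [->|qn]; first by rewrite mul0r.
  have qp : 0 < q t s by rewrite lt0r qn q0.
  by apply: mulr_ge0 => //; rewrite subr_ge0; apply: log2_le.
have hsum : \sum_(s : S) \sum_(t : T) (q t s * (log2 (p s) - log2 (q t s))) = 0.
  rewrite -[RHS]h0 /cond_entropy entropy_pair entropyY opprK addrC.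
  rewrite -sumrB; apply: eq_bigr => s _; rewrite -sumrB; apply: eq_bigr => t _.
  by rewrite mulrBr.
have allz t s : q t s * (log2 (p s) - log2 (q t s)) = 0.
  move/psumr_eq0P: hsum => /(_ (fun s _ => sumr_ge0 _ (fun t _ => term0 t s))) h.
  have := h s isT; move/psumr_eq0P => /(_ (fun t _ => term0 t s)) h2.
  exact: h2 t isT.
have qpos o : 0 < P o -> 0 < q (X o) (Y o).
  move=> po; apply: lt_le_trans po _; rewrite /q /prob (bigD1 o) //=.
  by rewrite lerDl; apply: sumr_ge0 => *.
have qeq o : 0 < P o -> q (X o) (Y o) = p (Y o).
  move=> po; have qp := qpos o po.
  apply/eqP; rewrite eq_le qle /=; rewrite leNgt; apply/negP => lt.
  have := allz (X o) (Y o); move/eqP; rewrite mulf_eq0 (gt_eqF qp) /= subr_eq0.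
  by rewrite gt_eqF // log2_lt.
apply/eqP; apply/negP => /negP ne.
have e1 := qeq o1 p1; have e2 := qeq o2 p2; rewrite -eY in e2.
have ps : 0 < p (Y o1) by rewrite -e1 qpos.
have : q (X o1) (Y o1) + q (X o2) (Y o1) <= p (Y o1).
  rewrite prob_pair (bigD1 (X o1)) //= (bigD1 (X o2)) /=; last by rewrite eq_sym.
  by rewrite addrA lerDl; apply: sumr_ge0 => *.
by rewrite e1 e2 -[X in _ <= X]add0r lerD2r leNgt ps.
Qed.
End Pair.

End Ent.

Lemma sum_prod (R : nmodType) (A B : finType) (f : A * B -> R) :
  \sum_(p : A * B) f p = \sum_(a : A) \sum_(b : B) f (a, b).
Proof. by rewrite pair_bigA; apply: eq_bigr => -[]. Qed.

Lemma sum_if_card (R : pzSemiRingType) (T : finType) (b : pred T) (a : R) :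
  \sum_(x : T) (if b x then a else 0) = (#|[set x | b x]|)%:R * a.
Proof.
rewrite -sum1_card natr_sum big_distrl /= [RHS]big_mkcond /=; apply: eq_bigr => j _.
by rewrite inE; case: (b j); rewrite ?mul1r ?mul0r.
Qed.

Lemma card_Wset_gt0 K D : (D <= K)%N -> (0 < #|Wset K D|)%N.
Proof.
move=> hDK; apply/card_gt0P.
exists [set widen_ord hDK i | i : 'I_D]; rewrite inE card_imset ?card_ord //.
by move=> i j /(congr1 val) /= e; apply: val_inj.
Qed.

Lemma card_VsetII_gt0 (F : finFieldType) L D : (L <= D)%N -> (0 < #|VsetII F L D|)%N.
Proof.
move=> hLD; apply/card_gt0P; exists (pid_mx L : 'M[F]_(L, D)).
by rewrite inE rank_pid_mx.
Qed.

Lemma cardM_gt0 (F : finFieldType) m n : (0 < #|{: 'M[F]_(m, n)}|)%N.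
Proof. by apply/card_gt0P; exists 0. Qed.

Section Joint.
Variables (R : realType) (F : finFieldType) (K D L N : nat) (Rt : finType)
  (PR : {ffun Rt -> R}).
Hypotheses (hLD : (L <= D)%N) (hDK : (D <= K)%N)
  (PR0 : forall r, 0 <= PR r) (PR1 : \sum_(r : Rt) PR r = 1).

Local Notation P := (@jointII R F K D L N Rt PR).
Local Notation Om := (Omega F K D L N Rt).

Definition cw (w : {set 'I_K}) (v : 'M[F]_(L, D)) (r : Rt) : R :=
  (if w \in Wset K D then (#|Wset K D|%:R)^-1 else 0)
   * (if v \in VsetII F L D then (#|VsetII F L D|%:R)^-1 else 0)
   * PR r.

Definition iq : R := (#|{: 'M[F]_(K, N)}|%:R)^-1.

Lemma PE (o : Om) : P o = cw o.1.1.1 o.1.1.2 o.1.2 * iq.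
Proof. by rewrite ffunE. Qed.

Lemma sum_Om (f : Om -> R) : \sum_(o : Om) f o =
  \sum_(w : {set 'I_K}) \sum_(v : 'M[F]_(L, D)) \sum_(r : Rt) \sum_(X : 'M[F]_(K, N)) f (w, v, r, X).
Proof.
by rewrite !sum_prod.
Qed.

Lemma cw_ge0 w v r : 0 <= cw w v r.
Proof.
rewrite /cw; apply: mulr_ge0; first apply: mulr_ge0.
- by case: ifP => // _; rewrite invr_ge0 ler0n.
- by case: ifP => // _; rewrite invr_ge0 ler0n.
- exact: PR0.
Qed.

Lemma iq_gt0 : 0 < iq.
Proof. by rewrite /iq invr_gt0 ltr0n cardM_gt0. Qed.

Lemma P0 (o : Om) : 0 <= P o.
Proof. by rewrite PE; apply: mulr_ge0; [apply: cw_ge0 | apply: ltW; apply: iq_gt0]. Qed.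

Lemma sum_if_inv (T : finType) (A : {set T}) : (0 < #|A|)%N ->
  \sum_(x : T) (if x \in A then (#|A|%:R : R)^-1 else 0) = 1.
Proof.
move=> h; rewrite sum_if_card.
have -> : [set x | x \in A] = A by apply/setP => x; rewrite inE.
by rewrite mulfV // pnatr_eq0 -lt0n.
Qed.

Lemma sum_cw : \sum_(w : {set 'I_K}) \sum_(v : 'M[F]_(L, D)) \sum_(r : Rt) cw w v r = 1.
Proof.
under eq_bigr => w _ do under eq_bigr => v _ do rewrite /cw -big_distrr /= PR1 mulr1.
under eq_bigr => w _ do rewrite -big_distrr /= sum_if_inv ?card_VsetII_gt0 // mulr1.
by rewrite sum_if_inv // card_Wset_gt0.
Qed.

Lemma P_sum1 : \sum_(o : Om) P o = 1.
Proof.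
rewrite sum_Om -[RHS]sum_cw; apply: eq_bigr => w _; apply: eq_bigr => v _.
apply: eq_bigr => r _; under eq_bigr => X _ do rewrite PE /=.
rewrite -big_distrr /= sumr_const -mulr_natr /iq mulVf ?mulr1 //.
by rewrite pnatr_eq0 -lt0n cardM_gt0.
Qed.

Lemma prob_g (g : {set 'I_K} -> 'M[F]_(L, D) -> Rt -> 'M[F]_(K, N) -> bool) :
  prob P (fun o => g o.1.1.1 o.1.1.2 o.1.2 o.2) =
  \sum_(w : {set 'I_K}) \sum_(v : 'M[F]_(L, D)) \sum_(r : Rt)
     (cw w v r * ((#|[set X | g w v r X]|)%:R * iq)).
Proof.
rewrite /prob big_mkcond sum_Om; apply: eq_bigr => w _; apply: eq_bigr => v _.
apply: eq_bigr => r _ /=.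
under eq_bigr => X _ do rewrite PE /=.
by rewrite sum_if_card mulrCA.
Qed.

Lemma prob_g0 (g : {set 'I_K} -> 'M[F]_(L, D) -> Rt -> bool) :
  prob P (fun o => g o.1.1.1 o.1.1.2 o.1.2) =
  \sum_(w : {set 'I_K}) \sum_(v : 'M[F]_(L, D)) \sum_(r : Rt)
     (cw w v r * (g w v r)%:R).
Proof.
rewrite (prob_g (fun w v r (X : 'M[F]_(K, N)) => g w v r)).
apply: eq_bigr => w _; apply: eq_bigr => v _; apply: eq_bigr => r _.
case: (g w v r); last by rewrite (_ : [set _ : 'M[F]_(K, N) | false] = set0) ?cards0 ?mul0r //; apply/setP => X; rewrite !inE.
rewrite /iq; have -> : [set _ : 'M[F]_(K, N) | true] = setT by apply/setP => X; rewrite !inE.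
by rewrite cardsT mulfV // pnatr_eq0 -lt0n cardM_gt0.
Qed.

End Joint.

Lemma globalU_eq (F : finFieldType) K D L (w : {set 'I_K}) (v : 'M[F]_(L, D)) :
  globalU w v = globalU' w v.
Proof. by []. Qed.

Section Conv.
Variables (R : realType) (F : finFieldType) (K D L N : nat) (Rt Qt At : finType)
  (PR : {ffun Rt -> R})
  (qf : {set 'I_K} -> 'M[F]_(L, D) -> Rt -> Qt)
  (af : Qt -> 'M[F]_(K, N) -> At).
Hypotheses (hL : (1 <= L)%N) (hLD : (L <= D)%N) (hDK : (D <= K)%N) (hN : (0 < N)%N).
Hypothesis hJ : is_JPLT_II PR qf af.

Local Notation P := (@jointII R F K D L N Rt PR).
Local Notation r := (K - D + L)%N.

Lemma cw_V (w : {set 'I_K}) (v : 'M[F]_(L, D)) (x : Rt) : 0 < cw PR w v x -> v \in VsetII F L D.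
Proof.
rewrite /cw; case: (v \in VsetII F L D) => //.
by rewrite mulr0 mul0r ltxx.
Qed.

Lemma fiber_bound (w : {set 'I_K}) (v : 'M[F]_(L, D)) (x : Rt) (a : At) : 0 < cw PR w v x ->
  (#|[set X | af (qf w v x) X == a]| * #|F| ^ (r * N) <= #|F| ^ (K * N))%N.
Proof.
case: hJ => PR0 PR1 hrec hpriv cpos.
have P0' : forall o : Omega F K D L N Rt, 0 <= P o := fun o => P0 PR0 o.
set Q0 := qf w v x.
have Ppos X : 0 < P (w, v, x, X) by rewrite PE mulr_gt0 // iq_gt0.
have hQ : 0 < prob P (fun o => rvQ qf o == Q0).
  apply: lt_le_trans (Ppos 0) _; rewrite /prob (bigD1 (w, v, x, 0)) /=; last by rewrite /rvQ /= eqxx.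
  by rewrite lerDl; apply: sumr_ge0 => *.
pose opick w0 := [pick o | (0 < P o) && (rvW o == w0) && (rvQ qf o == Q0)].
pose Uf w0 : 'M[F]_(L, K) := if opick w0 is Some o then globalU o.1.1.1 o.1.1.2 else 0.
have key (w0 : {set 'I_K}) : #|w0| = D -> exists (v1 : 'M[F]_(L, D)) (x1 : Rt) (X1 : 'M[F]_(K, N)),
    [/\ 0 < P (w0, v1, x1, X1), qf w0 v1 x1 = Q0 & Uf w0 = globalU w0 v1].
  move=> cw0; rewrite /Uf /opick; case: pickP => [[[[w1 v1] x1] X1] /andP [/andP [po /eqP eW] /eqP eQ]|none].
    rewrite /rvW /= in eW; rewrite /rvQ /= in eQ; subst w1.
    by exists v1, x1, X1.
  exfalso.
  have hw0 : w0 \in Wset K D by rewrite inE cw0.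
  have := hpriv Q0 hQ w0 hw0.
  rewrite /prob big1 ?mul0r; last first.
    move=> o /andP [e1 e2]; have := none o; rewrite e1 e2 !andbT => /negbT.
    by rewrite lt_def negb_and negbK P0' orbF => /eqP.
  by move/eqP; rewrite eq_sym invr_eq0 pnatr_eq0 eqn0Ngt bin_gt0 hDK.
set S := (\sum_(w0 : {set 'I_K} | #|w0| == D) <<Uf w0>>)%MS.
have hU (w0 : {set 'I_K}) : #|w0| = D ->
    (L <= \rank (Uf w0))%N /\ (Uf w0 <= S)%MS /\ (Uf w0 <= Eset F w0)%MS.
  move=> cw0; have [v1 [x1 [X1 [po eQ eU]]]] := key w0 cw0.
  split; last split.
  - rewrite eU globalU_eq globalU_Emb mxrankMfree ?Emb_free //.
    move: po; rewrite PE /= => po.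
    have : v1 \in VsetII F L D.
      apply: (@cw_V w0 v1 x1); rewrite -(pmulr_lgt0 _ (@iq_gt0 R F K N)) //.
    by rewrite inE => /eqP ->.
  - apply: (sumsmx_sup w0); first by rewrite cw0. by rewrite genmxE.
  - rewrite eU; by apply: supp_Eset => i j jn; rewrite globalU_eq globalU_supp.
have rS : (r <= \rank S)%N := dimbound hL hLD hDK hU.
set Fib := [set X | af Q0 X == a].
have hFib X X' : X \in Fib -> X' \in Fib -> row_base S *m X = row_base S *m X'.
  rewrite !inE => /eqP eX /eqP eX'.
  apply/eqP; rewrite -subr_eq0 -mulmxBr -sub_kermx.
  rewrite eq_row_base; apply/sumsmx_subP => w0 /eqP cw0.
  rewrite genmxE sub_kermx mulmxBr subr_eq0.
  have [v1 [x1 [X1 [po eQ ->]]]] := key w0 cw0.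
  have po1 X2 : 0 < P (w0, v1, x1, X2) by rewrite PE /= -(PE _ (w0, v1, x1, X1)).
  apply/eqP; have := det P0' hrec (po1 X) (po1 X').
  rewrite /rvZ /rvA /rvQ /rvW /rvV /= eQ eX eX' => h.
  exact: h.
have := inj_count (row_base_free S) hFib.
rewrite !card_mx => h.
apply: leq_trans h; rewrite leq_mul2l; apply/orP; right.
by rewrite leq_pexp2l ?card_gt0 ?leq_mul2r ?rS ?orbT //; apply/card_gt0P; exists 0.
Qed.

Lemma probA_bound (a : At) :
  prob P (fun o => rvA qf af o == a) <= ((#|F| ^ (r * N))%:R)^-1.
Proof.
case: hJ => PR0 PR1 _ _.
rewrite (prob_g PR (fun w v x X => af (qf w v x) X == a)).
set c0 := ((#|F| ^ (r * N))%:R)^-1 : R.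
have e := sum_cw F hLD hDK PR1.
apply: (@le_trans _ _ (\sum_(w : {set 'I_K}) \sum_(v : 'M[F]_(L, D)) \sum_(x : Rt) cw PR w v x * c0)); last first.
  rewrite -[X in _ <= X]mul1r -e big_distrl /= le_eqVlt; apply/orP; left; apply/eqP.
  apply: eq_bigr => w _; rewrite big_distrl; apply: eq_bigr => v _; by rewrite big_distrl.
apply: ler_sum => w _; apply: ler_sum => v _; apply: ler_sum => x _ /=.
have cg0 := @cw_ge0 R F K D L Rt PR PR0 w v x.
case: (eqVneq (cw PR w v x) 0) => [->|cn]; first by rewrite !mul0r.
have cp : 0 < cw PR w v x by rewrite lt0r cn cg0.
apply: ler_wpM2l => //.
have hb := fiber_bound a cp.
have qpos : (0 < #|F|)%N by apply/card_gt0P; exists 0.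
have qK : (0 : R) < (#|F| ^ (K * N))%:R by rewrite ltr0n expn_gt0 qpos.
have qr : (0 : R) < (#|F| ^ (r * N))%:R by rewrite ltr0n expn_gt0 qpos.
rewrite /iq card_mx ler_pdivrMr // mulrC ler_pdivlMr //.
by rewrite -natrM ler_nat.
Qed.

Lemma entA_bound : (r * N)%:R * log2 (#|F|%:R : R) <= entropy P (rvA qf af).
Proof.
case: hJ => PR0 PR1 _ _.
have qpos : (0 < #|F|)%N by apply/card_gt0P; exists 0.
have qr : (0 : R) < (#|F| ^ (r * N))%:R by rewrite ltr0n expn_gt0 qpos.
apply: le_trans (entropy_lb (fun o => P0 PR0 o) (P_sum1 F N hLD hDK PR1) _ probA_bound).
  rewrite /log2 lnV ?posrE // mulNr opprK natrX lnXn ?ltr0n //.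
  by rewrite -[ln _ *+ _]mulr_natl mulrA.
by rewrite invr_gt0.
Qed.

End Conv.

Lemma rate_le (R : realType) (a h h0 c : R) : 0 <= a -> 0 < h0 -> h0 <= h ->
  a / h0 = c -> a / h <= c.
Proof.
move=> a0 h00 hh <-; apply: ler_wpM2l => //.
by rewrite lef_pV2 ?posrE // (lt_le_trans h00 hh).
Qed.

Lemma converse (R : realType) (K D L : nat) :
  (1 <= L)%N -> (L <= D)%N -> (D <= K)%N ->
  (forall (F : finFieldType) (N : nat), (0 < N)%N ->
   forall (Rt Qt At : finType) (PR : {ffun Rt -> R})
     (qf : {set 'I_K} -> 'M[F]_(L, D) -> Rt -> Qt)
     (af : Qt -> 'M[F]_(K, N) -> At),
     is_JPLT_II PR qf af ->
     rateII PR qf af <= (L%:R : R) / ((K - D + L)%N)%:R).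
Proof.
move=> hL hLD hDK F N hN Rt Qt At PR qf af hJ.
have q1 : (1 < #|F|)%N by apply: card_finNzRing_gt1.
have lq : 0 < log2 (#|F|%:R : R).
  by rewrite /log2 divr_gt0 ?ln2_gt0 // ln_gt0 // ltr1n.
have rp : (0 < K - D + L)%N by lia.
apply: (rate_le _ _ (entA_bound hL hLD hDK hJ)).
- by apply: mulr_ge0; [apply: ler0n | apply: ltW].
- by apply: mulr_gt0 => //; rewrite ltr0n muln_gt0 rp hN.
- rewrite !natrM; field.
  by rewrite -natrD !pnatr_eq0 -!lt0n rp hN (gt_eqF lq).
Qed.

Lemma globalU_eq' (F : finFieldType) K D L (w : {set 'I_K}) (v : 'M[F]_(L, D)) :
  globalU w v = globalU' w v.
Proof. by []. Qed.

Section Sym.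
Variables (R : realType) (F : finFieldType) (K D L : nat).
Hypotheses (hL : (1 <= L)%N) (hLD : (L <= D)%N) (hDK : (D <= K)%N).
Local Notation r := (K - D + L)%N.

Definition Fr : {set 'M[F]_(r, K)} := [set G | \rank G == r].
Definition piG (G : 'M[F]_(r, K)) : R := if G \in Fr then (#|Fr|%:R)^-1 else 0.
Definition nw (w : {set 'I_K}) (G : 'M[F]_(r, K)) : nat :=
  #|[set V : 'M[F]_(L, D) | (V \in VsetII F L D) && (globalU w V <= G)%MS]|.
Definition fw (w : {set 'I_K}) (V : 'M[F]_(L, D)) : R :=
  \sum_(G : 'M[F]_(r, K)) (if (globalU w V <= G)%MS then piG G / (nw w G)%:R else 0).

Lemma Fr_gt0 : (0 < #|Fr|)%N.
Proof.
apply/card_gt0P; exists (pid_mx r); rewrite inE rank_pid_mx //; lia.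
Qed.

Lemma sum_pi : \sum_(G : 'M[F]_(r, K)) piG G = 1.
Proof. by rewrite /piG sum_if_inv // Fr_gt0. Qed.

Lemma pi_ge0 G : 0 <= piG G.
Proof. by rewrite /piG; case: ifP => // _; rewrite invr_ge0 ler0n. Qed.

Variable w : {set 'I_K}.
Hypothesis cw : #|w| = D.
Local Notation gh g := (@ghat F K D w g).

Lemma nw_gt0 G : G \in Fr -> (0 < nw w G)%N.
Proof.
rewrite inE => /eqP rG.
have h : (K - D + L <= \rank G)%N by rewrite rG.
have [V [rV sV]] := exists_V cw (L := L) hDK hLD h.
by apply/card_gt0P; exists V; rewrite !inE rV eqxx globalU_eq'.
Qed.

Lemma U_mul (V : 'M[F]_(L, D)) g : globalU w (V *m g) = globalU w V *m gh g.
Proof. by rewrite !globalU_eq' !globalU_Emb -!mulmxA Emb_ghat. Qed.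

Lemma ghat_free g : g \in unitmx -> row_free (gh g).
Proof. by move=> gu; apply/row_freeP; exists (gh (invmx g)); apply: ghat_unit. Qed.

Lemma nw_le g G : g \in unitmx -> (nw w G <= nw w (G *m gh g))%N.
Proof.
move=> gu; rewrite /nw.
set S1 := [set V | _]; set S2 := [set V | _].
have inj : injective (fun V : 'M[F]_(L, D) => V *m g).
  by move=> V1 V2 /= e; rewrite -(mulmxK gu V1) e mulmxK.
rewrite -(card_imset S1 inj); apply: subset_leq_card; apply/subsetP => V2.
case/imsetP => V1; rewrite !inE => /andP [rV sV] ->.
rewrite U_mul submxMfree ?ghat_free // sV andbT.
by rewrite mxrankMfree // row_free_unit.
Qed.

Lemma nw_eq g G : g \in unitmx -> nw w (G *m gh g) = nw w G.
Proof.
move=> gu; apply/eqP; rewrite eqn_leq nw_le // andbT.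
have giu : invmx g \in unitmx by rewrite unitmx_inv.
have := @nw_le (invmx g) (G *m gh g) giu.
by rewrite -mulmxA ghat_unit // mulmx1.
Qed.

Lemma pi_mul g G : g \in unitmx -> piG (G *m gh g) = piG G.
Proof. by move=> gu; rewrite /piG !inE mxrankMfree // ghat_free. Qed.

Lemma fw_mul V g : g \in unitmx -> fw w (V *m g) = fw w V.
Proof.
move=> gu; rewrite /fw.
have inj : injective (fun G : 'M[F]_(r, K) => G *m gh g).
  move=> G1 G2 /= e.
  by rewrite -(mulmx1 G1) -(ghat_unit cw gu) mulmxA e -mulmxA ghat_unit // mulmx1.
rewrite (reindex_inj inj) /=; apply: eq_bigr => G _.
by rewrite U_mul submxMfree ?ghat_free // pi_mul // nw_eq.
Qed.

Lemma fw_mulC V C : C \in unitmx -> fw w (C *m V) = fw w V.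
Proof.
move=> Cu; rewrite /fw; apply: eq_bigr => G _.
rewrite !globalU_eq' !globalU_Emb -mulmxA.
have hC : row_full C by rewrite row_full_unit.
by rewrite (eqmxMfull _ hC).
Qed.

Lemma fw_const V V' : \rank V = L -> \rank V' = L -> fw w V' = fw w V.
Proof.
move=> rV rV'; have [C [g [Cu gu ->]]] := transit (etrans rV (esym rV')).
by rewrite fw_mul // fw_mulC.
Qed.

Lemma fw_sum : \sum_(V : 'M[F]_(L, D)) (if V \in VsetII F L D then fw w V else 0) = 1.
Proof.
rewrite -sum_pi.
transitivity (\sum_(V : 'M[F]_(L, D)) \sum_(G : 'M[F]_(r, K))
   (if (V \in VsetII F L D) && (globalU w V <= G)%MS then piG G / (nw w G)%:R else 0)).
  apply: eq_bigr => V _; case: ifP => hV; last by rewrite big1.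
  by rewrite /fw; apply: eq_bigr.
rewrite exchange_big /=; apply: eq_bigr => G _.
rewrite sum_if_card -/(nw w G).
rewrite /piG; case: ifP => hG; last by rewrite mul0r mulr0.
rewrite mulrCA mulfV ?mulr1 //.
by rewrite pnatr_eq0 -lt0n nw_gt0.
Qed.

Lemma fw_val V : V \in VsetII F L D -> fw w V = (#|VsetII F L D|%:R)^-1.
Proof.
move=> hV; have := fw_sum.
have rV : \rank V = L by move: hV; rewrite inE => /eqP.
have e2 : \sum_(V' : 'M[F]_(L, D)) (if V' \in VsetII F L D then fw w V' else 0) =
   \sum_(V' : 'M[F]_(L, D)) (if V' \in VsetII F L D then fw w V else 0).
  apply: eq_bigr => V' _; case: ifP => // h.
  by rewrite (fw_const rV) //; move: h; rewrite inE => /eqP.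
rewrite e2 sum_if_card => e.
have e3 : [set x | x \in VsetII F L D] = VsetII F L D by apply/setP => x; rewrite inE.
rewrite e3 in e.
have nz : (#|VsetII F L D|%:R : R) != 0 by rewrite pnatr_eq0 -lt0n card_VsetII_gt0.
by apply: (mulfI nz); rewrite e mulfV.
Qed.

End Sym.

Section Ach.
Variables (R : realType) (F : finFieldType) (K D L N : nat).
Hypotheses (hL : (1 <= L)%N) (hLD : (L <= D)%N) (hDK : (D <= K)%N) (hN : (0 < N)%N).
Local Notation r := (K - D + L)%N.
Local Notation Kt := ({set 'I_K} * 'M[F]_(L, D))%type.
Local Notation Qt := 'M[F]_(r, K).
Local Notation Rt := {ffun Kt -> Qt}.
Local Notation nV := (#|VsetII F L D|%:R : R).

Definition kap (k : Kt) (G : Qt) : R :=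
  if (k.1 \in Wset K D) && (k.2 \in VsetII F L D) then
     (if (globalU k.1 k.2 <= G)%MS then piG R G / (nw k.1 G)%:R else 0) * nV
  else (G == 0)%:R.

Lemma nV_neq0 : nV != 0.
Proof. by rewrite pnatr_eq0 -lt0n card_VsetII_gt0. Qed.

Lemma kap_ge0 k G : 0 <= kap k G.
Proof.
rewrite /kap; case: ifP => _; last by case: (G == 0).
apply: mulr_ge0 => //; case: ifP => // _.
by apply: divr_ge0 => //; apply: pi_ge0.
Qed.

Lemma kap_sum k : \sum_(G : Qt) kap k G = 1.
Proof.
rewrite /kap; case: (boolP ((k.1 \in Wset K D) && (k.2 \in VsetII F L D))) => [/andP [hw hv]|hn].
  rewrite -big_distrl /=.
  have cw : #|k.1| = D by move: hw; rewrite inE => /eqP.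
  have := fw_val R hL hLD hDK cw hv; rewrite /fw => ->.
  by rewrite mulVf // nV_neq0.
rewrite (bigD1 0) //= eqxx big1 ?addr0 // => G /negbTE -> //.
Qed.

Definition PRa : {ffun Rt -> R} := [ffun rho : Rt => \prod_(k : Kt) kap k (rho k)].

Lemma PRa_ge0 rho : 0 <= PRa rho.
Proof. by rewrite ffunE; apply: prodr_ge0 => k _; apply: kap_ge0. Qed.

Lemma PRa_sum1 : \sum_(rho : Rt) PRa rho = 1.
Proof.
under eq_bigr => rho _ do rewrite ffunE.
rewrite -(bigA_distr_bigA (fun k G => kap k G)) /=.
by rewrite big1 // => k _; apply: kap_sum.
Qed.

Lemma PRa_marg k0 G0 : \sum_(rho : Rt) PRa rho * (rho k0 == G0)%:R = kap k0 G0.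
Proof.
pose h k G := if k == k0 then kap k G * (G == G0)%:R else kap k G.
transitivity (\sum_(rho : Rt) \prod_(k : Kt) h k (rho k)).
  apply: eq_bigr => rho _; rewrite ffunE (bigD1 k0) //= [RHS](bigD1 k0) //=.
  rewrite /h eqxx mulrAC; congr (_ * _); apply: eq_bigr => k /negbTE -> //.
rewrite -(bigA_distr_bigA h) /= (bigD1 k0) //=.
rewrite [X in _ * X]big1 ?mulr1; last by move=> k /negbTE kn; rewrite /h kn kap_sum.
rewrite /h eqxx (bigD1 G0) //= eqxx mulr1 big1 ?addr0 // => G /negbTE ->.
by rewrite mulr0.
Qed.

Lemma PRa_kap rho k : PRa rho != 0 -> kap k (rho k) != 0.
Proof.
apply: contra => /eqP h; by rewrite ffunE (bigD1 k) //= h mul0r.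
Qed.

Definition qfa (w : {set 'I_K}) (V : 'M[F]_(L, D)) (rho : Rt) : Qt := rho (w, V).
Definition afa (G : Qt) (X : 'M[F]_(K, N)) : 'M[F]_(r, N) := G *m X.
Local Notation P := (@jointII R F K D L N Rt PRa).

Lemma cw_valid w V rho : cw PRa w V rho != 0 ->
  [/\ w \in Wset K D, V \in VsetII F L D & PRa rho != 0].
Proof.
rewrite /cw; case: (w \in Wset K D); last by rewrite !mul0r eqxx.
case: (V \in VsetII F L D); last by rewrite mulr0 mul0r eqxx.
by move=> h; split => //; apply: contra h => /eqP ->; rewrite mulr0.
Qed.

Lemma kap_valid w V G : w \in Wset K D -> V \in VsetII F L D ->
  kap (w, V) G != 0 -> (globalU w V <= G)%MS /\ G \in Fr F K D L.
Proof.
move=> hw hv; rewrite /kap /= hw hv /=; case: ifP => hs; last by rewrite mul0r eqxx.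
by rewrite /piG; case: ifP => // _; rewrite !mul0r eqxx.
Qed.

Lemma rec_ok : cond_entropy P (@rvZ F K D L N Rt)
   (fun o => (rvA qfa afa o, rvQ qfa o, rvW o, rvV o)) = 0.
Proof.
apply: (cond0 (phi := fun y : ('M[F]_(r, N) * Qt * {set 'I_K} * 'M[F]_(L, D)) =>
   globalU y.1.2 y.2 *m pinvmx y.1.1.2 *m y.1.1.1)).
move=> [[[w V] rho] X] /=; rewrite PE /= => hP.
have hc : cw PRa w V rho != 0 by apply: contra hP => /eqP ->; rewrite mul0r.
case/cw_valid: hc => hw hv hPR.
have [hs _] := kap_valid hw hv (PRa_kap (w, V) hPR).
by rewrite /rvZ /rvA /rvQ /afa /qfa /= mulmxA mulmxKpV.
Qed.

Lemma inner w G0 : \sum_(V : 'M[F]_(L, D)) \sum_(rho : Rt)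
   cw PRa w V rho * (rho (w, V) == G0)%:R =
   (if w \in Wset K D then (#|Wset K D|%:R)^-1 else 0) * piG R G0.
Proof.
transitivity (\sum_(V : 'M[F]_(L, D))
   (if w \in Wset K D then (#|Wset K D|%:R)^-1 else 0)
   * (if V \in VsetII F L D then nV^-1 else 0) * kap (w, V) G0).
  apply: eq_bigr => V _; rewrite -PRa_marg big_distrr /=; apply: eq_bigr => rho _.
  by rewrite /cw !mulrA.
case: ifP => hw; last by rewrite mul0r big1 // => V _; rewrite !mul0r.
have cw0 : #|w| = D by move: hw; rewrite inE => /eqP.
under eq_bigr => V _ do rewrite -mulrA.
rewrite -big_distrr /=; congr (_ * _).
transitivity (\sum_(V : 'M[F]_(L, D))
   (if (V \in VsetII F L D) && (globalU w V <= G0)%MS then piG R G0 / (nw w G0)%:R else 0)).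
  apply: eq_bigr => V _; rewrite /kap /= hw.
  case: (V \in VsetII F L D); last by rewrite mul0r.
  by rewrite /= mulrC -mulrA; case: ifP; rewrite ?mul0r // mulfV ?nV_neq0 // mulr1.
rewrite sum_if_card -/(nw w G0).
rewrite /piG; case: ifP => hG; last by rewrite mul0r mulr0.
rewrite mulrCA mulfV ?mulr1 //.
by rewrite pnatr_eq0 -lt0n (nw_gt0 hLD hDK cw0).
Qed.

Lemma probWQ w0 G0 : prob P (fun o => (rvW o == w0) && (rvQ qfa o == G0)) =
  (if w0 \in Wset K D then (#|Wset K D|%:R)^-1 else 0) * piG R G0.
Proof.
rewrite (prob_g0 N PRa (fun w V rho => (w == w0) && (rho (w, V) == G0))).
rewrite (bigD1 w0) //= [X in _ + X]big1 ?addr0.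
  by rewrite -inner; apply: eq_bigr => V _; apply: eq_bigr => rho _; rewrite eqxx.
move=> w /negbTE wn; apply: big1 => V _; apply: big1 => rho _.
by rewrite wn mulr0.
Qed.

Lemma probQ G0 : prob P (fun o => rvQ qfa o == G0) = piG R G0.
Proof.
rewrite (prob_g0 N PRa (fun w V rho => (rho (w, V) == G0))).
under eq_bigr => w _ do rewrite inner.
by rewrite -big_distrl /= sum_if_inv ?mul1r // card_Wset_gt0.
Qed.

Lemma priv_ok : forall (Q0 : Qt), 0 < prob P (fun o => rvQ qfa o == Q0) ->
      forall (w0 : {set 'I_K}), w0 \in Wset K D ->
        prob P (fun o => (rvW o == w0) && (rvQ qfa o == Q0))
          / prob P (fun o => rvQ qfa o == Q0) = ('C(K, D)%:R)^-1.
Proof.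
move=> Q0; rewrite probQ => hQ w0 hw0.
rewrite probWQ hw0 mulfK ?gt_eqF //.
by rewrite /Wset card_draws card_ord.
Qed.

Lemma probA a : prob P (fun o => rvA qfa afa o == a) = (#|{: 'M[F]_(r, N)}|%:R)^-1.
Proof.
rewrite (prob_g PRa (fun w V rho X => rho (w, V) *m X == a)).
set c := (#|{: 'M[F]_(r, N)}|%:R : R)^-1.
transitivity (\sum_(w : {set 'I_K}) \sum_(V : 'M[F]_(L, D)) \sum_(rho : Rt) cw PRa w V rho * c); last first.
  have e := sum_cw F hLD hDK PRa_sum1.
  rewrite -[RHS]mul1r -e big_distrl /=.
  apply: eq_bigr => w _; rewrite big_distrl; apply: eq_bigr => V _; by rewrite big_distrl.
apply: eq_bigr => w _; apply: eq_bigr => V _; apply: eq_bigr => rho _ /=.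
case: (eqVneq (cw PRa w V rho) 0) => [->|hc]; first by rewrite !mul0r.
congr (_ * _).
case/cw_valid: (hc) => hw hv hPR.
have [_ hG] := kap_valid hw hv (PRa_kap (w, V) hPR).
have rf : row_free (rho (w, V)) by move: hG; rewrite inE.
have := fiber_card a rf => e.
have nz : (#|{: 'M[F]_(r, N)}|%:R : R) != 0 by rewrite pnatr_eq0 -lt0n cardM_gt0.
have nz1 : (#|[set X : 'M[F]_(K, N) | rho (w, V) *m X == a]|%:R : R) != 0.
  by rewrite pnatr_eq0 -lt0n; move: (cardM_gt0 F K N); rewrite -e muln_gt0 => /andP [].
rewrite /iq /c -e natrM invfM mulrA mulfV ?mul1r //.
Qed.

Lemma entA : entropy P (rvA qfa afa) = (r * N)%:R * log2 (#|F|%:R : R).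
Proof.
rewrite entropyE.
under eq_bigr => a _ do rewrite probA.
have nz : (#|{: 'M[F]_(r, N)}|%:R : R) != 0 by rewrite pnatr_eq0 -lt0n cardM_gt0.
have np : (0 : R) < #|{: 'M[F]_(r, N)}|%:R by rewrite ltr0n cardM_gt0.
rewrite sumr_const -[(_ * _) *+ _]mulr_natl mulrA (_ : #|xpredT| = #|{: 'M[F]_(r, N)}|) // mulfV // mul1r.
rewrite /log2 lnV ?posrE // mulNr opprK card_mx natrX lnXn ?ltr0n ?card_gt0 //; last first.
  by apply/card_gt0P; exists 0.
by rewrite -[ln _ *+ _]mulr_natl mulrA.
Qed.

Lemma ach_main : is_JPLT_II PRa qfa afa /\
  rateII PRa qfa afa = (L%:R : R) / (r%:R).
Proof.
split.
  split; [exact: PRa_ge0 | exact: PRa_sum1 | exact: rec_ok | exact: priv_ok].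
have q1 : (1 < #|F|)%N by apply: card_finNzRing_gt1.
have lq : 0 < log2 (#|F|%:R : R).
  by rewrite /log2 divr_gt0 ?ln2_gt0 // ln_gt0 // ltr1n.
have rp : (0 < r)%N by lia.
rewrite /rateII entA !natrM; field.
by rewrite -natrD !pnatr_eq0 -!lt0n rp hN (gt_eqF lq).
Qed.

End Ach.


Theorem theorem2 (R : realType) (K D L : nat) :
  (1 <= L)%N -> (L <= D)%N -> (D <= K)%N ->
  (* converse: every JPLT-II protocol, any field, any N >= 1 *)
  (forall (F : finFieldType) (N : nat), (0 < N)%N ->
   forall (Rt Qt At : finType) (PR : {ffun Rt -> R})
     (qf : {set 'I_K} -> 'M[F]_(L, D) -> Rt -> Qt)
     (af : Qt -> 'M[F]_(K, N) -> At),
     is_JPLT_II PR qf af ->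
     rateII PR qf af <= (L%:R : R) / ((K - D + L)%N)%:R)
  /\
  (* achievability: for every finite field F_q with q >= K *)
  (forall (F : finFieldType), (K <= #|F|)%N ->
   forall (N : nat), (0 < N)%N ->
   exists (Rt Qt At : finType) (PR : {ffun Rt -> R})
     (qf : {set 'I_K} -> 'M[F]_(L, D) -> Rt -> Qt)
     (af : Qt -> 'M[F]_(K, N) -> At),
     is_JPLT_II PR qf af /\
     rateII PR qf af = (L%:R : R) / ((K - D + L)%N)%:R).
Proof.
move=> hL hLD hDK; split; first exact: converse.
move=> F _ N hN.
exists {ffun ({set 'I_K} * 'M[F]_(L, D)) -> 'M[F]_(K - D + L, K)},
  'M[F]_(K - D + L, K), 'M[F]_(K - D + L, N).
exists (@PRa R F K D L), (@qfa F K D L), (@afa F K D L N).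
exact: ach_main.
Qed.
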